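(* Every discrete fibration $F:\mathcal C\to\mathcal D$ between indiscretely based categories is an almost discrete fibration.
   Context: A functor $F:\mathcal E\to\mathcal B$ is a discrete fibration if for each object $E$ of $\mathcal E$ and each morphism $f:B\to F(E)$ there is a unique morphism $g:E'\to E$ with $F(g)=f$. An $\mathbb N$-grading on a category is a functor to $\mathbb N$ (viewed as a one-object category); a category is indiscretely based if it is $\mathbb N$-graded and each connected component of its subcategory of length-zero morphisms is indiscrete. A factorization $q=g_0\circ\cdots\circ g_{n+1}$ ($n\ge0$) is nontrivial if no $g_i$ is an isomorphism. $F:\mathcal C\to\mathcal D$ is an almost discrete fibration if for every morphism $q$ of $\mathcal D$, every $p$ with $F(p)=q$ and every nontrivial factorization $q=g_0\circ\cdots\circ g_{n+1}$, there is a nontrivial factorization $p=f_0\circ\cdots\circ f_{n+1}$ with $F(f_i)=g_i$ for all $i$, unique up to the relation $(f_0,\dots,f_{n+1})\sim(f'_0,\dots,f'_{n+1})$ if there are isomorphisms $h_0,\dots,h_n$ with $f'_0=f_0\circ h_0$, $f'_i=h_{i-1}^{-1}\circ f_i\circ h_i$ ($1\le i\le n$), $f'_{n+1}=h_n^{-1}\circ f_{n+1}$. *)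

(* Defs.v *)
(* Small categories presented "arrows-only": a type of
   objects, a single type of morphisms with domain/codomain maps, and a
   total composition operation whose laws are only required on composable
   pairs.  comp g f means g ∘ f (first f, then g). *)
From Stdlib Require Import Relations.

Record Cat := {
  Ob : Type;
  Mor : Type;
  dom : Mor -> Ob;
  cod : Mor -> Ob;
  idm : Ob -> Mor;
  comp : Mor -> Mor -> Mor;
  dom_idm : forall x, dom (idm x) = x;
  cod_idm : forall x, cod (idm x) = x;
  dom_comp : forall g f, dom g = cod f -> dom (comp g f) = dom f;
  cod_comp : forall g f, dom g = cod f -> cod (comp g f) = cod g;
  comp_idl : forall f, comp (idm (cod f)) f = f;
  comp_idr : forall f, comp f (idm (dom f)) = f;
  comp_assoc : forall h g f, dom h = cod g -> dom g = cod f ->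
      comp h (comp g f) = comp (comp h g) f
}.

Arguments dom {c} _.
Arguments cod {c} _.
Arguments idm {c} _.
Arguments comp {c} _ _.

Record Functor (C D : Cat) := {
  Fo : Ob C -> Ob D;
  Fm : Mor C -> Mor D;
  Fm_dom : forall f, dom (Fm f) = Fo (dom f);
  Fm_cod : forall f, cod (Fm f) = Fo (cod f);
  Fm_idm : forall x, Fm (idm x) = idm (Fo x);
  Fm_comp : forall g f, dom g = cod f -> Fm (comp g f) = comp (Fm g) (Fm f)
}.

Arguments Fo {C D} _ _.
Arguments Fm {C D} _ _.

(* Discrete fibration: for each E and f : B -> F E there is a unique
   morphism g : E' -> E with F g = f (the domain E' is part of g). *)
Definition discrete_fibration {C D : Cat} (F : Functor C D) : Prop :=
  forall (E : Ob C) (f : Mor D), cod f = Fo F E ->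
    exists! g : Mor C, cod g = E /\ Fm F g = f.

(* An N-grading: a functor to N viewed as a one-object category (monoid). *)
Definition N_grading (C : Cat) (len : Mor C -> nat) : Prop :=
  (forall x : Ob C, len (idm x) = 0) /\
  (forall g f : Mor C, dom g = cod f -> len (comp g f) = len g + len f).

Definition zero_arrow (C : Cat) (len : Mor C -> nat) (x y : Ob C) : Prop :=
  exists f : Mor C, len f = 0 /\ dom f = x /\ cod f = y.

Definition zero_connected (C : Cat) (len : Mor C -> nat) : relation (Ob C) :=
  clos_refl_sym_trans (Ob C) (zero_arrow C len).

Definition indiscretely_based (C : Cat) (len : Mor C -> nat) : Prop :=
  N_grading C len /\
  forall x y : Ob C, zero_connected C len x y ->
    exists! f : Mor C, len f = 0 /\ dom f = x /\ cod f = y.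

Definition inverse_pair {C : Cat} (h k : Mor C) : Prop :=
  dom h = cod k /\ cod h = dom k /\
  comp h k = idm (cod h) /\ comp k h = idm (dom h).

Definition is_iso {C : Cat} (h : Mor C) : Prop := exists k, inverse_pair h k.

Fixpoint chain {C : Cat} (g : nat -> Mor C) (m : nat) : Mor C :=
  match m with
  | 0 => g 0
  | S m' => comp (chain g m') (g (S m'))
  end.

(* q = g_0 ∘ ... ∘ g_{n+1}, a composable chain *)
Definition factorization {C : Cat} (q : Mor C) (n : nat) (g : nat -> Mor C) : Prop :=
  (forall i, i <= n -> dom (g i) = cod (g (S i))) /\ chain g (S n) = q.

Definition nontrivial_factorization {C : Cat} (q : Mor C) (n : nat)
    (g : nat -> Mor C) : Prop :=
  factorization q n g /\ forall i, i <= S n -> ~ is_iso (g i).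

Definition fact_equiv {C : Cat} (n : nat) (f f' : nat -> Mor C) : Prop :=
  exists h k : nat -> Mor C,
    (forall i, i <= n -> inverse_pair (h i) (k i) /\ cod (h i) = dom (f i)) /\
    f' 0 = comp (f 0) (h 0) /\
    (forall i, 1 <= i <= n -> f' i = comp (k (i - 1)) (comp (f i) (h i))) /\
    f' (S n) = comp (k n) (f (S n)).

Definition almost_discrete_fibration {C D : Cat} (F : Functor C D) : Prop :=
  forall (q : Mor D) (p : Mor C), Fm F p = q ->
  forall (n : nat) (g : nat -> Mor D), nontrivial_factorization q n g ->
    (exists f : nat -> Mor C, nontrivial_factorization p n f /\
        forall i, i <= S n -> Fm F (f i) = g i) /\
    (forall f f' : nat -> Mor C,
        nontrivial_factorization p n f -> (forall i, i <= S n -> Fm F (f i) = g i) ->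
        nontrivial_factorization p n f' -> (forall i, i <= S n -> Fm F (f' i) = g i) ->
        fact_equiv n f f').

(* Main.v *)
Require Import Defs.
From Stdlib Require Import Arith Lia.

Section S.
Context {C D : Cat} (F : Functor C D).

Lemma chain_dc (f : nat -> Mor C) n :
  (forall i, i <= n -> dom (f i) = cod (f (S i))) ->
  forall m, m <= S n -> dom (chain f m) = dom (f m) /\ cod (chain f m) = cod (f 0).
Proof.
  intros H m. induction m as [|m IH]; intros Hm; simpl; [auto|].
  destruct IH as [IH1 IH2]; [lia|].
  assert (E : dom (chain f m) = cod (f (S m))) by (rewrite IH1; apply H; lia).
  rewrite dom_comp, cod_comp by exact E. auto.
Qed.

Lemma chain_F (f : nat -> Mor C) n :
  (forall i, i <= n -> dom (f i) = cod (f (S i))) ->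
  forall m, m <= S n -> Fm F (chain f m) = chain (fun i => Fm F (f i)) m.
Proof.
  intros H m. induction m as [|m IH]; intros Hm; simpl; [auto|].
  rewrite Fm_comp. rewrite IH by lia. reflexivity.
  destruct (chain_dc f n H m) as [H1 _]; [lia|]. rewrite H1; apply H; lia.
Qed.

Lemma F_iso (h : Mor C) : is_iso h -> is_iso (Fm F h).
Proof.
  intros [k [H1 [H2 [H3 H4]]]]. exists (Fm F k).
  repeat split.
  - rewrite Fm_dom, Fm_cod; congruence.
  - rewrite Fm_dom, Fm_cod; congruence.
  - rewrite <- Fm_comp by auto. rewrite H3, Fm_idm, Fm_cod; auto.
  - rewrite <- Fm_comp by auto. rewrite H4, Fm_idm, Fm_dom; auto.
Qed.
End S.

Theorem proposition2p76 (C D : Cat) (lenC : Mor C -> nat) (lenD : Mor D -> nat)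
    (F : Functor C D) :
  indiscretely_based C lenC -> indiscretely_based D lenD ->
  discrete_fibration F -> almost_discrete_fibration F.
Proof.
  intros _ _ DF q p Hp n g [[Hc Hch] Hni].
  assert (Uniq : forall a b : Mor C, cod a = cod b -> Fm F a = Fm F b -> a = b).
  { intros a b Hab Fab.
    destruct (DF (cod a) (Fm F a) (Fm_cod _ _ F a)) as [x [_ Hx]].
    transitivity x; [symmetry|]; apply Hx; split; auto. }
  assert (Lemq : forall f : nat -> Mor C, nontrivial_factorization p n f ->
            (forall i, i <= S n -> Fm F (f i) = g i) -> cod (f 0) = cod p).
  { intros f [[Hf1 Hf2] _] _. destruct (chain_dc f n Hf1 (S n)) as [_ X]; auto.
    rewrite <- X, Hf2. reflexivity. }
  split.
  - assert (Ex : forall m, m <= S n -> exists f : nat -> Mor C,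
       (forall i, i <= m -> Fm F (f i) = g i) /\ cod (f 0) = cod p /\
       (forall i, i < m -> dom (f i) = cod (f (S i)))).
    { induction m as [|m IH]; intros Hm.
      - assert (cod (g 0) = Fo F (cod p)).
        { transitivity (cod q).
          + destruct (chain_dc g n Hc (S n)) as [_ X]; auto. rewrite <- Hch, X; auto.
          + rewrite <- Hp, Fm_cod; auto. }
        destruct (DF (cod p) (g 0) H) as [x [[Hx1 Hx2] _]].
        exists (fun _ => x). repeat split; auto.
        intros i Hi; assert (i = 0) by lia; subst; auto.
        intros; lia.
      - destruct IH as [f [Hf1 [Hf2 Hf3]]]; [lia|].
        assert (E : cod (g (S m)) = Fo F (dom (f m))).
        { rewrite <- Hc by lia. rewrite <- Hf1 by lia. apply Fm_dom. }
        destruct (DF _ _ E) as [l [[Hl1 Hl2] _]].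
        exists (fun i => if i <=? m then f i else l). repeat split.
        + intros i Hi. destruct (Nat.leb_spec i m); auto.
          assert (i = S m) by lia; subst; auto.
        + simpl; auto.
        + intros i Hi. destruct (Nat.leb_spec i m); [|lia].
          destruct (Nat.leb_spec (S i) m); auto.
          assert (i = m) by lia; subst; auto. }
    destruct (Ex (S n)) as [f [Hf1 [Hf2 Hf3]]]; auto.
    assert (Hcf : forall i, i <= n -> dom (f i) = cod (f (S i))) by (intros; apply Hf3; lia).
    exists f. split; [|auto]. split; [split; auto|].
    + apply Uniq.
      * destruct (chain_dc f n Hcf (S n)) as [_ X]; auto. rewrite X; auto.
      * rewrite (chain_F F f n Hcf (S n)) by auto. rewrite Hp, <- Hch.
        clear -Hf1. assert (forall m, m <= S n -> chain (fun i => Fm F (f i)) m = chain g m).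
        { induction m; intros; simpl; [auto|]. rewrite IHm, Hf1 by lia; auto. }
        auto.
    + intros i Hi Hiso. apply (Hni i Hi). rewrite <- Hf1 by auto. apply F_iso; auto.
  - intros f f' Hf Hfg Hf' Hf'g.
    assert (Eq : forall i, i <= S n -> f i = f' i).
    { induction i; intros Hi.
      - apply Uniq. rewrite (Lemq f Hf Hfg), (Lemq f' Hf' Hf'g); auto.
        rewrite Hfg, Hf'g; auto; lia.
      - apply Uniq.
        + destruct Hf as [[Hf1 _] _]; destruct Hf' as [[Hf1' _] _].
          rewrite <- Hf1, <- Hf1' by lia. rewrite IHi by lia; auto.
        + rewrite Hfg, Hf'g; auto. }
    destruct Hf as [[Hf1 _] _].
    exists (fun i => idm (dom (f i))), (fun i => idm (dom (f i))).
    split; [|split; [|split]].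
    + intros i Hi. unfold inverse_pair. rewrite !cod_idm, !dom_idm.
      repeat split; auto.
      * pose proof (comp_idl C (idm (dom (f i)))) as X. rewrite cod_idm in X. exact X.
      * pose proof (comp_idl C (idm (dom (f i)))) as X. rewrite cod_idm in X. exact X.
    + rewrite comp_idr. symmetry; apply Eq; lia.
    + intros i Hi. rewrite comp_idr.
      replace (dom (f (i - 1))) with (cod (f i)).
      * rewrite comp_idl. symmetry; apply Eq; lia.
      * replace i with (S (i - 1)) at 1 by lia. symmetry; apply Hf1; lia.
    + rewrite Hf1 by lia. rewrite comp_idl. symmetry; apply Eq; lia.
Qed.
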